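(* Let $\mathcal{U}$ be a subspace of $\mathbb{R}^n$. If $u\circ u$ is strictly balanced for every nonzero $u\in\mathcal{U}$, then $\mathcal{U}$ is realizable.
   Context: $u\circ u$ denotes the entrywise square of $u\in\mathbb{R}^n$. A vector $w\in\mathbb{R}^n$ is strictly balanced if $|w_i|<\sum_{j\ne i}|w_j|$ for all $i$. A correlation matrix is a positive semidefinite matrix with unit diagonal; $\mathcal{U}$ is realizable if some $n\times n$ correlation matrix has nullspace containing $\mathcal{U}$. *)

(* Defs.v *)
From mathcomp Require Import all_boot all_order all_algebra all_reals.
Set Implicit Arguments. Unset Strict Implicit. Unset Printing Implicit Defensive.
Import Order.TTheory GRing.Theory Num.Theory.
Local Open Scope ring_scope.

Definition hadsq (R : realType) (n : nat) (u : 'cV[R]_n) : 'cV[R]_n :=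
  \col_i (u i 0 * u i 0).

Definition strictly_balanced (R : realType) (n : nat) (w : 'cV[R]_n) : Prop :=
  forall i : 'I_n, `|w i 0| < \sum_(j < n | j != i) `|w j 0|.

Definition correlation_matrix (R : realType) (n : nat) (C : 'M[R]_n) : Prop :=
  [/\ C^T = C,
      (forall x : 'cV[R]_n, 0 <= (x^T *m C *m x) 0 0)
    & (forall i : 'I_n, C i i = 1)].

Definition realizable (R : realType) (n : nat) (U : {vspace 'cV[R]_n}) : Prop :=
  exists C : 'M[R]_n, correlation_matrix C /\
    (forall u : 'cV[R]_n, u \in U -> C *m u = 0).

(* Main.v *)
Require Import Defs.
From mathcomp Require Import all_boot all_order all_algebra all_reals.
From mathcomp Require Import lra.
Import Order.TTheory GRing.Theory Num.Theory.
Local Open Scope ring_scope.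

Lemma kernel_dd (R : realFieldType) n (H : 'M[R]_n) :
  (forall i, \sum_(j < n | j != i) `|H i j| < `|H i i|) ->
  forall x : 'cV_n, H *m x = 0 -> x = 0.
Proof.
move=> Hd x Hx; apply/matrixP => i j; rewrite [j]ord1 !mxE.
case: (@real_arg_maxP R _ i xpredT (fun k => `|x k 0|) isT (fun _ _ => normr_real _)) => k _ Hk.
have E : (H *m x) k 0 = 0 by rewrite Hx mxE.
rewrite mxE (bigD1 k) //= in E.
have B : `|H k k| * `|x k 0| <= (\sum_(j < n | j != k) `|H k j|) * `|x k 0|.
  rewrite -normrM.
  have -> : H k k * x k 0 = - \sum_(j < n | j != k) H k j * x j 0.
    by apply/eqP; rewrite -subr_eq0 opprK E.
  rewrite normrN mulr_suml.
  apply: le_trans (ler_norm_sum _ _ _) _.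
  apply: ler_sum => l _; rewrite normrM; apply: ler_wpM2l => //.
  exact: Hk.
have Hxk : `|x k 0| = 0.
  apply/eqP; rewrite eq_le normr_ge0 andbT; rewrite leNgt; apply/negP => Hp.
  by move: B; rewrite ler_pM2r // leNgt Hd.
by apply/eqP; rewrite -normr_eq0 eq_le normr_ge0 andbT -Hxk; exact: Hk.
Qed.

Lemma unit_of_ker (R : fieldType) n (H : 'M[R]_n) :
  (forall x : 'cV_n, H *m x = 0 -> x = 0) -> H \in unitmx.
Proof.
move=> K; rewrite -unitmx_tr -row_free_unit; apply: inj_row_free => v Hv.
have : H *m v^T = 0 by rewrite -[H]trmxK -trmx_mul Hv trmx0.
by move/K => /(congr1 trmx); rewrite trmxK trmx0.
Qed.

Lemma rowsplit {R : realFieldType} {n} (H : 'M[R]_n) (d : 'cV_n) r :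
  (H *m d) r 0 = H r r * d r 0 + \sum_(j < n | j != r) H r j * d j 0.
Proof. by rewrite mxE (bigD1 r). Qed.

Lemma pos_sol (R : realFieldType) n (H : 'M[R]_n) (d : 'cV_n) :
  (forall i j, i != j -> 0 <= H i j) ->
  (forall i j, \sum_(l < n | l != i) H i l < H j j) ->
  H *m d = const_mx 1 ->
  forall i, 0 <= d i 0.
Proof.
move=> Hnn Hs Hd i.
case: (@real_arg_minP R _ i xpredT (fun k => d k 0) isT (fun _ _ => num_real _)) => k _ Hk.
case: (@real_arg_maxP R _ i xpredT (fun k => d k 0) isT (fun _ _ => num_real _)) => l _ Hl.
apply: le_trans (Hk i isT); rewrite leNgt; apply/negP => dk.
have h1 := Hs k l; have h2 := Hs l k; have h3 := Hs k k.
have Ek := rowsplit H d k; have El := rowsplit H d l.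
set sk := \sum_(j < n | j != k) H k j in h1 h3 *.
set sl := \sum_(j < n | j != l) H l j in h2 *.
have sk0 : 0 <= sk by apply: sumr_ge0 => j; rewrite eq_sym; exact: Hnn.
have sl0 : 0 <= sl by apply: sumr_ge0 => j; rewrite eq_sym; exact: Hnn.
rewrite Hd mxE in Ek; rewrite Hd mxE in El.
have Uk : \sum_(j < n | j != k) H k j * d j 0 <= sk * d l 0.
  rewrite /sk mulr_suml; apply: ler_sum => j jk; apply: ler_wpM2l; last exact: Hl.
  by rewrite eq_sym in jk; exact: Hnn.
have Ll : sl * d k 0 <= \sum_(j < n | j != l) H l j * d j 0.
  rewrite /sl mulr_suml; apply: ler_sum => j jl; apply: ler_wpM2l; last exact: Hk.
  by rewrite eq_sym in jl; exact: Hnn.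
set a : R := d k 0 in Ek Uk dk Ll *; set b : R := d l 0 in El Ll Uk *.
set hk : R := H k k in Ek h2 h3 *; set hl : R := H l l in El h1 *.
have A1 : 1 <= hk * a + sk * b by lra.
have A2 : hl * b <= 1 - sl * a by lra.
have A3 : hl * (1 - hk * a) <= hl * (sk * b) by apply: ler_wpM2l; lra.
have A4 : sk * (hl * b) <= sk * (1 - sl * a) by apply: ler_wpM2l.
have A5 : sk * sl * (-a) <= hl * hk * (-a).
  apply: ler_wpM2r; first lra.
  apply: le_trans (_ : sk * hk <= _); [apply: ler_wpM2l; lra | apply: ler_wpM2r; lra].
clearbody a b hk hl sk sl; clear -A1 A2 A3 A4 A5 h1 h2 h3 sk0 sl0 dk; nra.
Qed.

Section Proj.
Variables (R : realFieldType) (n : nat) (U : {vspace 'cV[R]_n}).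

Definition Bm : 'M[R]_(n, \dim U) := \matrix_(i < n, j < \dim U) (((vbasis U)`_j : 'cV[R]_n) i 0).

Lemma Bmul (y : 'cV_(\dim U)) : Bm *m y = \sum_j y j 0 *: (vbasis U)`_j.
Proof.
apply/matrixP => i c; rewrite [c]ord1 !mxE summxE; apply: eq_bigr => j _.
by rewrite !mxE mulrC.
Qed.

Lemma memB (y : 'cV_(\dim U)) : Bm *m y \in U.
Proof.
rewrite Bmul; apply: rpred_sum => j _; apply: rpredZ; apply: vbasis_mem.
by apply: mem_nth; rewrite size_tuple.
Qed.

Lemma inU u : u \in U -> exists y, u = Bm *m y.
Proof.
move=> Hu; exists (\col_j coord (vbasis U) j u).
rewrite Bmul {1}(coord_vbasis Hu); apply: eq_bigr => j _; by rewrite mxE.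
Qed.

Lemma freeB (y : 'cV_(\dim U)) : Bm *m y = 0 -> y = 0.
Proof.
rewrite Bmul => H; have F := basis_free (vbasisP U).
have := (freeP F (fun j => y j 0) H) => Z.
by apply/matrixP => i c; rewrite [c]ord1 Z mxE.
Qed.

Lemma sumsq0 m (v : 'cV[R]_m) : (v^T *m v) 0 0 = \sum_i v i 0 * v i 0.
Proof. by rewrite mxE; apply: eq_bigr => i _; rewrite mxE. Qed.

Lemma sumsq_ge0 m (v : 'cV[R]_m) : 0 <= (v^T *m v) 0 0.
Proof. by rewrite sumsq0; apply: sumr_ge0 => i _; by rewrite -expr2 sqr_ge0. Qed.


Lemma mul_self_ge0 (x : R) : 0 <= x * x.
Proof. by rewrite -expr2 sqr_ge0. Qed.

Lemma sumsq_eq0 m (v : 'cV[R]_m) : (v^T *m v) 0 0 = 0 -> v = 0.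
Proof.
rewrite sumsq0 => H; apply/matrixP => i c; rewrite [c]ord1 mxE.
have := psumr_eq0P (fun j _ => mul_self_ge0 (v j 0)) H (i:=i) isT.
by move/eqP; rewrite mulf_eq0 orbb => /eqP.
Qed.

Definition Gm := Bm^T *m Bm.

Lemma Gunit : Gm \in unitmx.
Proof.
apply: unit_of_ker => y Hy; apply: freeB; apply: sumsq_eq0.
by rewrite trmx_mul -mulmxA (mulmxA Bm^T) -/Gm Hy !mulmx0 mxE.
Qed.

Definition Pm := Bm *m invmx Gm *m Bm^T.

Lemma GT : Gm^T = Gm. Proof. by rewrite /Gm trmx_mul trmxK. Qed.

Lemma PT : Pm^T = Pm.
Proof. by rewrite /Pm !trmx_mul trmxK trmx_inv GT mulmxA. Qed.

Lemma PB : Pm *m Bm = Bm.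
Proof. by rewrite /Pm -!mulmxA -/Gm mulVmx ?Gunit // mulmx1. Qed.

Lemma PP : Pm *m Pm = Pm.
Proof.
have E : Bm^T *m Pm = Bm^T by rewrite -{1}PT -trmx_mul PB.
by rewrite {1}/Pm -mulmxA E.
Qed.

Definition Qm := 1%:M - Pm.

Lemma Qm_ii i : Qm i i = 1 - Pm i i.
Proof. by rewrite /Qm !mxE eqxx. Qed.

Lemma QT : Qm^T = Qm. Proof. by rewrite /Qm linearB /= PT trmx1. Qed.

Lemma QQ : Qm *m Qm = Qm.
Proof. by rewrite /Qm mulmxBl !mulmxBr !mul1mx mulmx1 PP subrr subr0. Qed.

Lemma Qu u : u \in U -> Qm *m u = 0.
Proof. by case/inU=> y ->; rewrite /Qm mulmxBl mul1mx mulmxA PB subrr. Qed.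

Lemma Pcol i : Pm *m delta_mx i (0 : 'I_1) \in U.
Proof. by rewrite /Pm -!mulmxA memB. Qed.

End Proj.
Arguments Pm {R n} U.
Arguments Qm {R n} U.
Arguments PT {R n} U.
Arguments PP {R n} U.
Arguments QT {R n} U.
Arguments QQ {R n} U.
Arguments Qm_ii {R n} U i.
Arguments Qu {R n} U [u].
Arguments Pcol {R n} U i.

Theorem corollary4p5 (R : realType) (n : nat) (U : {vspace 'cV[R]_n}) :
  (forall u : 'cV[R]_n, u \in U -> u != 0 -> strictly_balanced (hadsq u)) ->
  realizable U.
Proof.
move=> Hyp.
set P := Pm U. set Q := Qm U.
have Psym : forall i j, P i j = P j i.
  by move=> i j; have E0 := PT U; rewrite -/P in E0; rewrite -[in LHS]E0 mxE.
have Psum : forall i, \sum_j P j i * P j i = P i i.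
  move=> i; have E0 := PP U; rewrite -/P in E0; rewrite -[in RHS]E0 mxE; apply: eq_bigr => j _; by rewrite Psym.
have Qii : forall i, 1/2 < Q i i.
  move=> i; rewrite /Q Qm_ii -/P.
  case: (eqVneq (P *m delta_mx i (0 : 'I_1)) 0) => [Z|NZ].
    have : (P *m delta_mx i (0 : 'I_1)) i 0 = P i i by rewrite -colE mxE.
    rewrite Z mxE => <-; lra.
  have SB := Hyp _ (Pcol U i) NZ i.
  have SB' : P i i * P i i < \sum_(j < n | j != i) P j i * P j i.
    move: SB; rewrite /strictly_balanced /hadsq -colE -/P mxE !mxE ger0_norm ?mul_self_ge0 //.
    rewrite (eq_bigr (fun j => P j i * P j i)) //.
    by move=> j _; rewrite !mxE ger0_norm ?mul_self_ge0.
  move: SB'; clear SB => SB.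
  have := Psum i; rewrite (bigD1 i) //= => F.
  set s := \sum_(j < n | j != i) P j i * P j i in SB F.
  set p := P i i in SB F *.
  clearbody s p; nra.
have Qsym : forall i j, Q i j = Q j i.
  by move=> i j; have E0 := QT U; rewrite -/Q in E0; rewrite -[in LHS]E0 mxE.
have Qsum : forall i, \sum_j Q i j * Q i j = Q i i.
  move=> i; have E0 := QQ U; rewrite -/Q in E0; rewrite -[in RHS]E0 mxE; apply: eq_bigr => j _; by rewrite [Q j i]Qsym.
set H : 'M[R]_n := \matrix_(i, j) (Q i j * Q i j).
have Hnn : forall i j, i != j -> 0 <= H i j by move=> i j _; rewrite mxE mul_self_ge0.
have Hs : forall i j, \sum_(l < n | l != i) H i l < H j j.
  move=> i j.
  have -> : \sum_(l < n | l != i) H i l = Q i i - Q i i * Q i i.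
    have := Qsum i; rewrite (bigD1 i) //= => F.
    rewrite -{1}F addrAC subrr add0r; apply: eq_bigr => l _; by rewrite mxE.
  rewrite [H j j]mxE; have := Qii i; have := Qii j; set a := Q i i; set b := Q j j.
  move=> hb ha; clearbody a b.
  have e1 : 0 <= (a - 1/2) * (a - 1/2) by apply: mul_self_ge0.
  have e2 : 0 < (b - 1/2) * (b + 1/2) by apply: mulr_gt0; lra.
  nra.
have Hunit : H \in unitmx.
  apply: unit_of_ker; apply: kernel_dd => i.
  rewrite ger0_norm; last by rewrite mxE mul_self_ge0.
  apply: le_lt_trans (Hs i i); rewrite le_eqVlt; apply/orP; left; apply/eqP.
  by apply: eq_bigr => j ji; rewrite ger0_norm // Hnn // eq_sym.
set d : 'cV[R]_n := invmx H *m const_mx 1.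
have Hd : H *m d = const_mx 1 by rewrite /d mulmxA mulmxV // mul1mx.
have dpos := pos_sol _ _ _ _ Hnn Hs Hd.
set S := diag_mx (\row_i Num.sqrt (d i 0)).
set A := S *m Q.
have Ak : forall k i, A k i = Num.sqrt (d k 0) * Q k i.
  by move=> k i; rewrite /A /S mul_diag_mx mxE [(\row_ _ _) 0 k]mxE.
exists (A^T *m A); split; first split.
- by rewrite trmx_mul trmxK.
- move=> x; rewrite mulmxA -mulmxA -trmx_mul; exact: sumsq_ge0.
- move=> i; rewrite mxE.
  have <- : (H *m d) i 0 = 1 by rewrite Hd mxE.
  rewrite mxE; apply: eq_bigr => k _.
  rewrite [A^T i k]mxE !Ak [H i k]mxE.
  rewrite mulrACA -expr2 sqr_sqrtr ?dpos // (Qsym k i) mulrC.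
  by rewrite mulrC.
- move=> u Hu; by rewrite /A -!mulmxA Qu // !mulmx0.
Qed.
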